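(* Consider a one-site PTM cascade with $n=1$ layer and positive $\overline{F},\overline{S}$. Let $\xi=\gamma\overline{F}/\delta$, $p_1(y)=\lambda y(\xi-y)$, $p_2(y)=(\delta+\gamma)y^2-\gamma(1/\delta+\overline{F}+\xi+\overline{S})y+\gamma\xi\overline{S}$, and $g=p_1/p_2$. Then $p_2$ has two positive real roots $\alpha_1<\alpha_2$ with $\alpha_1<\xi<\alpha_2$; $g$ is continuous and increasing on each of the intervals $(-\infty,\alpha_1)$, $(\alpha_1,\alpha_2)$, $(\alpha_2,\infty)$; $g(0)=0$ and $g(y)\to+\infty$ as $y\to\alpha_1^-$. Moreover, for every positive $\overline{E}$, at the BMSS one has $E=g(Y^0)$ and $Y^0\in(0,\alpha_1)$.
   Context: For $n=1$ the one-site PTM cascade has species $E,S^0,S^1,F,Y^0,Y^1$ with reactions $E+S^0\rightleftharpoons Y^0\to E+S^1$ (rate constants $a^0,b^0,c^0$) and $F+S^1\rightleftharpoons Y^1\to F+S^0$ (rate constants $a^1,b^1,c^1$), all positive, mass-action kinetics. Put $\delta=a^1/(b^1+c^1)$, $\gamma=(c^1/c^0)\delta$, $\lambda=\frac{b^0+c^0}{a^0}\gamma$. A steady state for total amounts $\overline{E},\overline{F},\overline{S}$ is a real solution of $Y^0=\gamma FS^1$, $Y^1=\delta FS^1$, $\lambda FS^1=S^0E$, $\overline{F}=F+Y^1$, $\overline{E}=E+Y^0$, $\overline{S}=S^0+S^1+Y^0+Y^1$. A BMSS is a steady state with positive total amounts and all concentrations nonnegative. Increasing means strictly increasing. *)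

(* Defs.v *)
From Stdlib Require Import Reals Lra.
Open Scope R_scope.

Definition ptm_delta (a1 b1 c1 : R) : R := a1 / (b1 + c1).
Definition ptm_gamma (c0 a1 b1 c1 : R) : R := (c1 / c0) * ptm_delta a1 b1 c1.
Definition ptm_lambda (a0 b0 c0 a1 b1 c1 : R) : R :=
  (b0 + c0) / a0 * ptm_gamma c0 a1 b1 c1.

Definition steady_state (a0 b0 c0 a1 b1 c1 : R) (Etot Ftot Stot : R)
  (E S0 S1 F Y0 Y1 : R) : Prop :=
  let d := ptm_delta a1 b1 c1 in
  let g := ptm_gamma c0 a1 b1 c1 in
  let l := ptm_lambda a0 b0 c0 a1 b1 c1 in
  Y0 = g * F * S1 /\ Y1 = d * F * S1 /\ l * F * S1 = S0 * E /\
  Ftot = F + Y1 /\ Etot = E + Y0 /\ Stot = S0 + S1 + Y0 + Y1.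

Definition BMSS (a0 b0 c0 a1 b1 c1 : R) (Etot Ftot Stot : R)
  (E S0 S1 F Y0 Y1 : R) : Prop :=
  steady_state a0 b0 c0 a1 b1 c1 Etot Ftot Stot E S0 S1 F Y0 Y1 /\
  0 < Etot /\ 0 < Ftot /\ 0 < Stot /\
  0 <= E /\ 0 <= S0 /\ 0 <= S1 /\ 0 <= F /\ 0 <= Y0 /\ 0 <= Y1.

(* Strictly increasing on the open interval (a,b); use None for infinite ends. *)
Definition in_interval (lo hi : option R) (x : R) : Prop :=
  (match lo with Some a => a < x | None => True end) /\
  (match hi with Some b => x < b | None => True end).

Definition strictly_increasing_on (f : R -> R) (lo hi : option R) : Prop :=
  forall x y, in_interval lo hi x -> in_interval lo hi y -> x < y -> f x < f y.

Definition continuous_on (f : R -> R) (lo hi : option R) : Prop :=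
  forall x, in_interval lo hi x -> continuity_pt f x.

(* Main.v *)
Require Import Defs.
From Stdlib Require Import Reals Lra Psatz FunctionalExtensionality.
Open Scope R_scope.
Lemma mono (A B C xi lam x y : R) : 0 < A -> 0 < C -> 0 < xi -> 0 < lam ->
  A*xi^2 - B*xi + C < 0 -> x < y ->
  (forall z, x <= z <= y -> 0 < (A*x^2-B*x+C)*(A*z^2-B*z+C)) ->
  lam*x*(xi-x)/(A*x^2-B*x+C) < lam*y*(xi-y)/(A*y^2-B*y+C).
Proof.
intros hA hC hxi hl hpxi hxy H.
set (K := B - xi*A).
assert (hK1 : C < K*xi) by (unfold K; nra).
assert (hK : 0 < K) by nra.
set (Qxx := K*x^2 - 2*C*x + xi*C).
assert (hQxx : 0 < Qxx).
{ assert (E0 : K*Qxx = (K*x - C)^2 + C*(K*xi - C)) by (unfold Qxx; ring).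
    assert (0 < K*Qxx). { rewrite E0. assert (0 <= (K*x-C)^2) by apply pow2_ge_0. assert (0 < C*(K*xi-C)) by (apply Rmult_lt_0_compat; lra). lra. }
    destruct (Rlt_or_le 0 Qxx); [assumption|]. nra. }
set (Qxy := K*x*y - C*(x+y) + xi*C).
assert (hQ : 0 < Qxy).
{ destruct (Rlt_or_le 0 Qxy) as [h|h]; [exact h|exfalso].
  assert (E1 : Qxy = Qxx + (K*x - C)*(y-x)) by (unfold Qxy, Qxx; ring).
  set (w := C - K*x).
  assert (hw : 0 < w) by (unfold w; nra).
  set (z := C*(xi-x)/w).
  assert (hzw : z*w = C*(xi-x)) by (unfold z; field; lra).
  assert (hz1 : (z-x)*w = Qxx) by (unfold Qxx; unfold w in *; nra).
  assert (hzx : x < z) by nra.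
  assert (hzy : z <= y) by (unfold w in *; nra).
  specialize (H z ltac:(lra)).
  assert (Id : (A*z^2 - B*z + C)*w^2 = C*(A*xi^2-B*xi+C)*(A*x^2-B*x+C)).
  { replace ((A*z^2 - B*z + C)*w^2) with (A*(z*w)^2 - B*(z*w)*w + C*w^2) by ring.
    rewrite hzw. unfold w, K. ring. }
  assert (0 < (A*x^2-B*x+C)*((A*z^2-B*z+C)*w^2)) by (rewrite <- Rmult_assoc; apply Rmult_lt_0_compat; [exact H| apply pow_lt; exact hw]).
  rewrite Id in H0.
  assert (0 <= (A*x^2-B*x+C)^2) by apply pow2_ge_0.
  replace ((A*x^2-B*x+C)*(C*(A*xi^2-B*xi+C)*(A*x^2-B*x+C))) with ((C*(A*xi^2-B*xi+C))*(A*x^2-B*x+C)^2) in H0 by ring.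
  assert (C*(A*xi^2-B*xi+C) < 0) by (apply Rmult_pos_neg; assumption).
  set (u := C*(A*xi^2-B*xi+C)) in *. set (v := (A*x^2-B*x+C)^2) in *. nra. }
assert (Hy := H y ltac:(lra)).
set (px := A*x^2-B*x+C) in *. set (py := A*y^2-B*y+C) in *.
assert (px <> 0) by (intro e; rewrite e in Hy; lra).
assert (py <> 0) by (intro e; rewrite e in Hy; lra).
assert (E : lam*y*(xi-y)/py - lam*x*(xi-x)/px = lam*(y-x)*Qxy/(px*py)).
{ unfold Qxy, K, px, py. field. split; assumption. }
assert (0 < lam*(y-x)*Qxy/(px*py)).
{ apply Rdiv_lt_0_compat; [|assumption]. apply Rmult_lt_0_compat; [|assumption]. nra. }
lra.
Qed.
Lemma bmss_part d gm l Ft St Et E S0 S1 F Y0 Y1 : 0<d -> 0<gm -> 0<l -> 0<Ft -> 0<St -> 0<Et ->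
  Y0 = gm*F*S1 -> Y1 = d*F*S1 -> l*F*S1 = S0*E -> Ft = F+Y1 -> Et = E+Y0 ->
  St = S0+S1+Y0+Y1 -> 0<=E -> 0<=S0 -> 0<=S1 -> 0<=F ->
  0 < Y0 /\ Y0 < gm*Ft/d /\
  (d+gm)*Y0^2 - gm*(/d+Ft+gm*Ft/d+St)*Y0 + gm*(gm*Ft/d)*St = gm*(gm*Ft/d-Y0)*S0 /\
  E * ((d+gm)*Y0^2 - gm*(/d+Ft+gm*Ft/d+St)*Y0 + gm*(gm*Ft/d)*St) = l*Y0*(gm*Ft/d-Y0).
Proof.
intros hd hg hl hFt hSt hEt e1 e2 e3 e4 e5 e6 hE hS0 hS1 hF.
subst Y0 Y1 Ft St Et.
assert (hF' : 0 < F).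
{ destruct (Rle_lt_or_eq_dec 0 F hF) as [h|h]; [exact h|]. subst F. lra. }
assert (hS1' : 0 < S1).
{ destruct (Rle_lt_or_eq_dec 0 S1 hS1) as [h|h]; [exact h|]. subst S1.
  exfalso. rewrite !Rmult_0_r in e3. rewrite !Rmult_0_r, Rplus_0_r in hEt.
  assert (S0 = 0) by nra. subst. lra. }
assert (hxi : gm*(F+d*F*S1)/d - gm*F*S1 = gm*F/d) by (field; lra).
assert (0 < gm*F/d) by (apply Rdiv_lt_0_compat; nra).
assert (0 < gm*F*S1) by (apply Rmult_lt_0_compat; nra).
assert (Id : (d+gm)*(gm*F*S1)^2 - gm*(/d+(F+d*F*S1)+gm*(F+d*F*S1)/d+(S0+S1+gm*F*S1+d*F*S1))*(gm*F*S1)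
   + gm*(gm*(F+d*F*S1)/d)*(S0+S1+gm*F*S1+d*F*S1) = gm*(gm*(F+d*F*S1)/d-gm*F*S1)*S0) by (field; lra).
split; [lra|]. split; [lra|]. split; [exact Id|].
rewrite Id, hxi.
replace (E*(gm*(gm*F/d)*S0)) with (gm*(gm*F/d)*(S0*E)) by ring.
rewrite <- e3. field. lra.
Qed.

Theorem mainTheorem4 (a0 b0 c0 a1 b1 c1 Ftot Stot : R)
  (ha0 : 0 < a0) (hb0 : 0 < b0) (hc0 : 0 < c0)
  (ha1 : 0 < a1) (hb1 : 0 < b1) (hc1 : 0 < c1)
  (hF : 0 < Ftot) (hS : 0 < Stot) :
  let delta := ptm_delta a1 b1 c1 in
  let gamma := ptm_gamma c0 a1 b1 c1 in
  let lambda := ptm_lambda a0 b0 c0 a1 b1 c1 in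
  let xi := gamma * Ftot / delta in
  let p1 := fun y : R => lambda * y * (xi - y) in
  let p2 := fun y : R =>
    (delta + gamma) * y ^ 2 - gamma * (/ delta + Ftot + xi + Stot) * y
    + gamma * xi * Stot in
  let g := fun y : R => p1 y / p2 y in
  exists alpha1 alpha2 : R,
    (0 < alpha1 /\ alpha1 < xi /\ xi < alpha2 /\
     forall y, p2 y = 0 <-> (y = alpha1 \/ y = alpha2)) /\
    (continuous_on g None (Some alpha1) /\ strictly_increasing_on g None (Some alpha1)) /\
    (continuous_on g (Some alpha1) (Some alpha2) /\
     strictly_increasing_on g (Some alpha1) (Some alpha2)) /\
    (continuous_on g (Some alpha2) None /\ strictly_increasing_on g (Some alpha2) None) /\
    g 0 = 0 /\
    (forall M : R, exists eps : R, 0 < eps /\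
       forall y, alpha1 - eps < y < alpha1 -> M < g y) /\
    (forall Etot E S0 S1 F Y0 Y1 : R, 0 < Etot ->
       BMSS a0 b0 c0 a1 b1 c1 Etot Ftot Stot E S0 S1 F Y0 Y1 ->
       E = g Y0 /\ 0 < Y0 /\ Y0 < alpha1).
Proof.
intros delta gamma lambda xi p1 p2 g.
assert (hd : 0 < delta) by (unfold delta, ptm_delta; apply Rdiv_lt_0_compat; lra).
assert (hg : 0 < gamma) by (unfold gamma, ptm_gamma; fold delta;
  apply Rmult_lt_0_compat; [apply Rdiv_lt_0_compat; lra | exact hd]).
assert (hl : 0 < lambda) by (unfold lambda, ptm_lambda; fold gamma;
  apply Rmult_lt_0_compat; [apply Rdiv_lt_0_compat; lra | exact hg]).
assert (hxi : 0 < xi) by (unfold xi; apply Rdiv_lt_0_compat; nra).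
assert (Hbm : forall Etot E S0 S1 F Y0 Y1 : R, 0 < Etot ->
       BMSS a0 b0 c0 a1 b1 c1 Etot Ftot Stot E S0 S1 F Y0 Y1 ->
       0 < Y0 /\ Y0 < xi /\ p2 Y0 = gamma*(xi-Y0)*S0 /\ E * p2 Y0 = p1 Y0).
{ intros Etot E S0 S1 F Y0 Y1 hE [[e1 [e2 [e3 [e4 [e5 e6]]]]] [_ [_ [_ [h1 [h2 [h3 [h4 _]]]]]]]].
  exact (bmss_part delta gamma lambda Ftot Stot Etot E S0 S1 F Y0 Y1 hd hg hl hF hS hE
     e1 e2 e3 e4 e5 e6 h1 h2 h3 h4). }
assert (Hg : forall y, g y = p1 y / p2 y) by reflexivity.
assert (Hp1 : forall y, p1 y = lambda * y * (xi - y)) by reflexivity.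
set (A := delta + gamma). set (B := gamma * (/ delta + Ftot + xi + Stot)).
set (C := gamma * xi * Stot).
assert (Hp2 : forall y, p2 y = A*y^2 - B*y + C) by reflexivity.
assert (Hxd : xi * delta = gamma * Ftot) by (unfold xi; field; lra).
assert (hA : 0 < A) by (unfold A; lra).
assert (hC : 0 < C) by (unfold C; apply Rmult_lt_0_compat; nra).
assert (hpxi : A*xi^2 - B*xi + C < 0).
{ assert (E : A*xi^2 - B*xi + C = xi*(xi*delta - gamma*Ftot) - gamma*xi/delta)
    by (unfold A, B, C; field; lra).
  rewrite E, Hxd. assert (0 < gamma*xi/delta) by (apply Rdiv_lt_0_compat; nra). lra. }
clearbody g p1 p2 xi delta gamma lambda A B C.
set (D := B^2 - 4*A*C).
assert (hD : 0 < D).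
{ assert (4*A*(A*xi^2 - B*xi + C) = (2*A*xi - B)^2 - D) by (unfold D; ring).
  assert (0 <= (2*A*xi-B)^2) by apply pow2_ge_0.
  assert (4*A*(A*xi^2 - B*xi + C) < 0) by nra. lra. }
set (s := sqrt D).
assert (hs : 0 < s) by (apply sqrt_lt_R0; exact hD).
assert (hss : s*s = D) by (apply sqrt_sqrt; lra).
set (al1 := (B - s)/(2*A)). set (al2 := (B + s)/(2*A)).
assert (Hfac : forall y, p2 y = A*((y-al1)*(y-al2))).
{ intro y. rewrite Hp2.
  assert (E : 4*A*A*((y-al1)*(y-al2)) = (2*A*y - B + s)*(2*A*y - B - s))
    by (unfold al1, al2; field; lra).
  assert (E2 : (2*A*y - B + s)*(2*A*y - B - s) = 4*A*(A*y^2 - B*y + C))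
    by (replace ((2*A*y - B + s)*(2*A*y - B - s)) with ((2*A*y-B)^2 - s*s) by ring;
        rewrite hss; unfold D; ring).
  apply (Rmult_eq_reg_l (4*A)); [|lra]. rewrite <- E2, <- E. ring. }
assert (h12 : al1 < al2).
{ unfold al1, al2. apply Rmult_lt_compat_r; [apply Rinv_0_lt_compat; lra | lra]. }
assert (hxi1 : al1 < xi /\ xi < al2).
{ assert (hp : A*((xi-al1)*(xi-al2)) < 0) by (rewrite <- Hfac, Hp2; exact hpxi).
  assert (hq : (xi-al1)*(xi-al2) < 0).
  { destruct (Rlt_or_le ((xi-al1)*(xi-al2)) 0) as [h|h]; [exact h|].
    exfalso. assert (0 <= A*((xi-al1)*(xi-al2))) by (apply Rmult_le_pos; lra). lra. }
  split; nra. }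
destruct hxi1 as [hx1 hx2].
assert (hal1 : 0 < al1).
{ assert (H0 : p2 0 = C) by (rewrite Hp2; ring).
  rewrite Hfac in H0. destruct (Rlt_or_le 0 al1) as [h|h]; [exact h|exfalso].
  assert (0 <= A*((-al1)*al2)) by (apply Rmult_le_pos; [lra|apply Rmult_le_pos; lra]).
  replace (A*((0-al1)*(0-al2))) with (-(A*((-al1)*al2))) in H0 by ring. lra. }
assert (Hpos : forall y, y < al1 \/ al2 < y -> 0 < p2 y).
{ intros y [hy|hy]; rewrite Hfac; apply Rmult_lt_0_compat; try lra; nra. }
assert (Hneg : forall y, al1 < y < al2 -> p2 y < 0).
{ intros y hy; rewrite Hfac. assert ((y-al1)*(y-al2) < 0) by nra. nra. }
assert (Hcont : forall y, p2 y <> 0 -> continuity_pt g y).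
{ intros y hy.
  assert (Heq : g = fun t => lambda * t * (xi - t) / (A*t^2 - B*t + C)).
  { apply functional_extensionality. intro t. rewrite Hg, Hp1, Hp2. reflexivity. }
  rewrite Heq. rewrite Hp2 in hy. reg. all: try exact hy. }
assert (Hmono : forall x y, x < y -> (forall z, x <= z <= y -> 0 < p2 x * p2 z) -> g x < g y).
{ intros x y hxy H. rewrite !Hg, !Hp1, !Hp2.
  apply mono; try assumption. intros z hz. rewrite <- !Hp2. apply H; exact hz. }
exists al1, al2.
split; [split; [exact hal1|split; [exact hx1|split; [exact hx2|]]]|].
{ intro y. rewrite Hfac. split.
  - intro h. apply Rmult_integral in h. destruct h as [h|h]; [lra|].
    apply Rmult_integral in h. destruct h as [h|h]; [left|right]; lra.
  - intros [h|h]; subst y; ring. }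
split; [split|].
{ intros x [_ hx]. apply Hcont. assert (0 < p2 x) by (apply Hpos; lra). lra. }
{ intros x y [_ hx] [_ hy] hxy. apply Hmono; [exact hxy|]. intros z hz.
  apply Rmult_lt_0_compat; apply Hpos; lra. }
split; [split|].
{ intros x [hx1' hx2']. apply Hcont. assert (p2 x < 0) by (apply Hneg; lra). lra. }
{ intros x y [hx1' hx2'] [hy1 hy2] hxy. apply Hmono; [exact hxy|]. intros z hz.
  assert (p2 x < 0) by (apply Hneg; lra). assert (p2 z < 0) by (apply Hneg; lra). nra. }
split; [split|].
{ intros x [hx _]. apply Hcont. assert (0 < p2 x) by (apply Hpos; lra). lra. }
{ intros x y [hx _] [hy _] hxy. apply Hmono; [exact hxy|]. intros z hz.
  apply Rmult_lt_0_compat; apply Hpos; lra. }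
split.
{ rewrite Hg, Hp1. unfold Rdiv. ring. }
split.
{ intro M.
  set (m := lambda*(al1/2)*(xi-al1)).
  assert (hm : 0 < m) by (unfold m; apply Rmult_lt_0_compat; [nra|lra]).
  set (K := A*al2*(Rabs M + 1)).
  assert (hK : 0 < K) by (unfold K; assert (0 <= Rabs M) by apply Rabs_pos;
    apply Rmult_lt_0_compat; nra).
  exists (Rmin (al1/2) (m/K)). split.
  { apply Rmin_glb_lt; [lra| apply Rdiv_lt_0_compat; assumption]. }
  intros y [hy1 hy2].
  assert (he1 := Rmin_l (al1/2) (m/K)). assert (he2 := Rmin_r (al1/2) (m/K)).
  set (eps := Rmin (al1/2) (m/K)) in *.
  assert (hy0 : al1/2 < y) by lra.
  assert (hp1 : m <= p1 y).
  { rewrite Hp1; unfold m.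
    assert (hq : (al1/2)*(xi-al1) <= y*(xi-y)).
    { apply Rmult_le_compat; lra. }
    rewrite !Rmult_assoc. apply Rmult_le_compat_l; lra. }
  assert (hp2 : 0 < p2 y) by (apply Hpos; lra).
  assert (hp2' : p2 y < A*al2*eps).
  { rewrite Hfac. replace ((y-al1)*(y-al2)) with ((al1-y)*(al2-y)) by ring.
    assert (0 < al1 - y < eps) by lra. assert (0 < al2 - y < al2) by lra.
    assert ((al1-y)*(al2-y) < eps*al2) by nra. nra. }
  assert (hKe : K*eps <= m).
  { assert (K*(m/K) = m) by (field; lra). nra. }
  assert (hMp : M * p2 y < m).
  { assert (M <= Rabs M) by apply RRle_abs. assert (0 <= Rabs M) by apply Rabs_pos.
    unfold K in hKe. nra. }
  rewrite Hg. apply (Rmult_lt_reg_r (p2 y)); [exact hp2|].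
  unfold Rdiv. rewrite Rmult_assoc, Rinv_l, Rmult_1_r by lra. lra. }
intros Etot E S0 S1 F Y0 Y1 hE HB.
destruct (Hbm Etot E S0 S1 F Y0 Y1 hE HB) as [hy0 [hyx [hpy hEp]]].
assert (hS0 : 0 <= S0) by (destruct HB as [_ [_ [_ [_ [_ [h _]]]]]]; exact h).
assert (hp1 : 0 < p1 Y0) by (rewrite Hp1; apply Rmult_lt_0_compat; nra).
assert (hp2 : 0 < p2 Y0).
{ assert (0 <= p2 Y0) by (rewrite hpy; apply Rmult_le_pos; nra).
  destruct (Rle_lt_or_eq_dec _ _ H) as [h|h]; [exact h|].
  rewrite <- h in hEp. lra. }
split; [|split; [exact hy0|]].
{ rewrite Hg, <- hEp. field. lra. }
rewrite Hfac in hp2. destruct (Rlt_or_le Y0 al1) as [h|h]; [exact h|exfalso].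
assert (0 <= A*((Y0-al1)*(al2-Y0))) by (apply Rmult_le_pos; [lra|apply Rmult_le_pos; lra]).
replace (A*((Y0-al1)*(Y0-al2))) with (-(A*((Y0-al1)*(al2-Y0)))) in hp2 by ring. lra.
Qed.
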